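(* For all integers $r\ge1$, $1\le l\le r$ and $0\le z\le q\le r$, $$ r\sum_{m=0}^{z}\binom{l-1}{m}\binom{r-l}{q-m-1}\;\ge\; q\sum_{m=0}^{z}\binom{l-1}{m}\binom{r-l+1}{q-m}. $$
   Context: Binomial coefficients $\binom{a}{b}$ are taken to be $0$ when $b<0$ or $b>a$. *)

(* Defs.v *)
From mathcomp Require Import all_boot all_order all_algebra.
Set Implicit Arguments. Unset Strict Implicit. Unset Printing Implicit Defensive.

(* Binomial coefficient with natural top and integer bottom index:
   binz n k = 'C(n, k) for k >= 0, and 0 for k < 0 (convention of the paper).
   ('C(n,k) = 0 for k > n already.) *)
Definition binz (n : nat) (k : int) : nat :=
  match k with
  | Posz k' => 'C(n, k')
  | Negz _ => 0
  end.

(* Main.v *)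
Require Import Defs.
From mathcomp Require Import all_boot all_order all_algebra zify ring.

Lemma crossing (f g : nat -> nat) n z :
  z <= n ->
  \sum_(0 <= m < n) f m = \sum_(0 <= m < n) g m ->
  (forall m m', m < m' < n -> f m < g m -> f m' <= g m') ->
  \sum_(0 <= m < z) g m <= \sum_(0 <= m < z) f m.
Proof.
move=> zn tot cross.
have [/existsP [[m /= mz] Hm]|] := boolP [exists m : 'I_z, f m < g m].
  have Hrest : \sum_(z <= m < n) f m <= \sum_(z <= m < n) g m.
    rewrite big_nat [X in _ <= X]big_nat; apply: leq_sum => i /andP[zi iN].
    by apply: (cross m) => //; rewrite iN (leq_trans mz zi).
  move: tot; rewrite !(@big_cat_nat _ _ _ z 0 n) //=.
  lia.
rewrite negb_exists => /forallP H.
rewrite big_nat [X in _ <= X]big_nat; apply: leq_sum => i /andP[_ iz].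
by have := H (Ordinal iz); rewrite /= -leqNgt.
Qed.

Lemma binz_pos n q m : m <= q -> binz n (q%:Z - m%:Z)%R = 'C(n, q - m).
Proof. by move=> h; rewrite subzn. Qed.

Lemma binz_pos1 n q m : m < q -> binz n (q%:Z - m%:Z - 1)%R = 'C(n, q - m.+1).
Proof.
move=> h; have -> : (q%:Z - m%:Z - 1 = q%:Z - (m.+1)%:Z)%R.
  by rewrite -addn1 PoszD GRing.opprD GRing.addrA.
by rewrite subzn.
Qed.

Lemma binz_neg n q : binz n (q%:Z - q%:Z - 1)%R = 0.
Proof. by rewrite GRing.subrr. Qed.

Lemma keyA r q b d X Y Z : 0 < d -> b.+1*Y = d*Z ->
  r*(X*Y) < q*(X*Z) -> r*d < q*b.+1.
Proof.
move=> d0 e h; rewrite ltnNge; apply/negP => h2.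
have : X*Y*(q*b.+1) <= X*Y*(r*d) by rewrite leq_mul2l h2 orbT.
have : d*(r*(X*Y)) < d*(q*(X*Z)) by rewrite ltn_pmul2l.
have -> : d*(q*(X*Z)) = X*Y*(q*b.+1) by rewrite (_ : X*Y*(q*b.+1) = q*X*(b.+1*Y)); [rewrite e; ring | ring].
have -> : d*(r*(X*Y)) = X*Y*(r*d) by ring.
move=> h3 h4; have := leq_trans h3 h4; by rewrite ltnn.
Qed.

Lemma keyB r q b d X Y Z : 0 < d -> b.+1*Y = d*Z ->
  r*d <= q*b.+1 -> r*(X*Y) <= q*(X*Z).
Proof.
move=> d0 e h; rewrite -(leq_pmul2l d0).
have -> : d*(q*(X*Z)) = X*Y*(q*b.+1) by rewrite (_ : X*Y*(q*b.+1) = q*X*(b.+1*Y)); [rewrite e; ring | ring].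
have -> : d*(r*(X*Y)) = X*Y*(r*d) by ring.
by rewrite leq_mul2l h orbT.
Qed.

Theorem lemma4p3 (r l z q : nat) :
  1 <= r -> 1 <= l -> l <= r -> z <= q -> q <= r ->
  r * (\sum_(0 <= m < z.+1) 'C(l - 1, m) * binz (r - l) (q%:Z - m%:Z - 1)%R)
  >= q * (\sum_(0 <= m < z.+1) 'C(l - 1, m) * binz (r - l + 1) (q%:Z - m%:Z)%R).
Proof.
move=> r1 l1 lr zq qr.
case: q zq qr => [|q'] zq qr; first by rewrite mul0n.
set q := q'.+1.
set a := l - 1; set b := r - l.
have ra : r = a + b + 1 by rewrite /a /b; lia.
rewrite !big_distrr /=.
apply: (@crossing _ _ q.+1) => //.
-
  rewrite -!big_distrr /= [in LHS]big_nat_recr //= [in RHS]big_nat_recr //= binz_neg muln0 addn0 binz_pos // subnn.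
  have E1 : \sum_(0 <= i < q) 'C(a, i) * binz b (q%:Z - i%:Z - 1)%R = 'C(a + b, q').
    rewrite -(binomial.Vandermonde a b q') big_mkord.
    apply: eq_bigr => i _; rewrite binz_pos1 //; congr (_ * 'C(_, _)); lia.
  have E2 : \sum_(0 <= i < q) 'C(a, i) * binz (b + 1) (q%:Z - i%:Z)%R + 'C(a, q) * 'C(b + 1, 0)
            = 'C(a + b.+1, q).
    rewrite -(binomial.Vandermonde a b.+1 q) [in RHS]big_ord_recr /= subnn big_mkord; congr (_ + _).
    apply: eq_bigr => i _; rewrite binz_pos ?addn1 //; exact: ltnW.
    by rewrite addn1.
  rewrite E1 E2 ra addn1 addnS.
  have := mul_bin_diag (a + b).+1 q'; rewrite /=; exact.
- move=> m m' /andP[mm' m'q] h.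
  have mq : m < q by apply: leq_trans mm' _.
  move: h; rewrite binz_pos1 // binz_pos; last exact: ltnW.
  have e := mul_bin_diag b.+1 (q - m.+1).
  rewrite /= (_ : (q - m.+1).+1 = q - m) in e; last by lia.
  rewrite addn1.
  move=> h; have {h} h := @keyA r q b (q - m) _ _ _ _ e h.
  have {h} h : r * (q - m) < q * b.+1 by apply: h; rewrite subn_gt0.
  have [m'q'|] := ltnP m' q; last first.
    move=> qm'; have -> : m' = q by lia.
    by rewrite binz_neg !muln0.
  rewrite binz_pos1 // binz_pos; last exact: ltnW.
  have e' := mul_bin_diag b.+1 (q - m'.+1).
  rewrite /= (_ : (q - m'.+1).+1 = q - m') in e'; last by lia.
  rewrite ?addn1.
  apply: (@keyB r q b (q - m') _ _ _ _ e'); first by rewrite subn_gt0.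
  have : r * (q - m') <= r * (q - m) by rewrite leq_mul2l; apply/orP; right; lia.
  move: h; lia.
Qed.
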